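(* The values $z_{\sigma,j}$ can be chosen such that the points of $P_L^\mathrm{z}$ are affinely independent for each combinatorial line $L$ of $\mathrm{HJ}(d,n)$. Moreover, with this choice, $\conv(P_L^\mathrm{z})$ is a facet of $\conv(P^\mathrm{z})$.
   Context: Here $d>5$. Combinatorial lines and $\mathrm{HJ}(d,n)$: for $\tau\in([d]\cup\{*\})^n\setminus[d]^n$ and $k\in\mathbb{R}$, $\sigma(\tau,k)$ is $\tau$ with every $*$ replaced by $k$; $L_\tau=\{\sigma(\tau,k):k\in[d]\}$, and $\mathrm{HJ}(d,n)$ is the hypergraph on $[d]^n$ of all combinatorial lines. Vectors $v_1,\dots,v_n\in\mathbb{R}^2$ have positive $x$-components; $p_\sigma=\sum_i\sigma_iv_i$; $P=\{p_\sigma:\sigma\in[d]^n\}$ consists of distinct points; for a line $L$, $P_L=\{p_\sigma:\sigma\in L\}$ spans the line $y=a_Lx+b_L$, which meets $P$ exactly in $P_L$. $\nu(x,y)=(x^2,xy,y^2,x,y)$. $\phi_\epsilon(x,y)=(x,y+\sqrt{\epsilon x})$, $p^\epsilon_\sigma=\phi_\epsilon(p_\sigma)$, $P^\epsilon=\phi_\epsilon(P)$, $P^\epsilon_L=\phi_\epsilon(P_L)$; $g^\epsilon_L$ is the affine function on $\mathbb{R}^5$ with $g^\epsilon_L(x^2,xy,y^2,x,y)=(y-a_Lx-b_L)^2-\epsilon x$, and $\epsilon>0$ is small enough that for every line $L$, $g^\epsilon_L$ vanishes on $\nu(P^\epsilon_L)$ and is positive on $\nu(P^\epsilon\setminus P^\epsilon_L)$;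 moreover $\nu(P^\epsilon_L)$ spans the hyperplane $(g^\epsilon_L)^{-1}(0)$ in $\mathbb{R}^5$, any 5 of its points being affinely independent. For $\sigma\in[d]^n$ let $p^\mathrm{z}_\sigma=(\nu(p^\epsilon_\sigma),z_{\sigma,1},\dots,z_{\sigma,d-5})\in\mathbb{R}^d$, $P^\mathrm{z}=\{p^\mathrm{z}_\sigma:\sigma\in[d]^n\}$ and $P^\mathrm{z}_L=\{p^\mathrm{z}_\sigma:\sigma\in L\}$. *)

(* Defs.v *)
From HB Require Import structures.
From mathcomp Require Import all_boot all_order all_algebra.
From mathcomp Require Import reals.
Set Implicit Arguments. Unset Strict Implicit. Unset Printing Implicit Defensive.
Import Order.TTheory GRing.Theory Num.Theory.
Local Open Scope ring_scope.

(* Words sigma in [d]^n : the entry k : 'I_d stands for the number k+1 in [d]. *)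
Definition word (d n : nat) := {ffun 'I_n -> 'I_d}.
(* tau in ([d] u {*})^n : None stands for the symbol * . *)
Definition pattern (d n : nat) := {ffun 'I_n -> option 'I_d}.

Definition is_line d n (tau : pattern d n) : bool := [exists i, tau i == None].

Definition sigma_tau d n (tau : pattern d n) (k : 'I_d) : word d n :=
  [ffun i => if tau i is Some c then c else k].

Definition in_line d n (tau : pattern d n) (sigma : word d n) : Prop :=
  exists k : 'I_d, sigma = sigma_tau tau k.

Section Geom.
Variable R : realType.

Definition pt d n (vx vy : 'I_n -> R) (sigma : word d n) : R * R :=
  (\sum_(i < n) (sigma i).+1%:R * vx i, \sum_(i < n) (sigma i).+1%:R * vy i).

Definition nu (p : R * R) : 'rV[R]_5 :=
  \row_(i < 5) nth 0 [:: p.1 ^+ 2; p.1 * p.2; p.2 ^+ 2; p.1; p.2] i.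

Definition phi (eps : R) (p : R * R) : R * R := (p.1, p.2 + Num.sqrt (eps * p.1)).

(* g^eps_L : the affine function on R^5 with
   g(x^2,xy,y^2,x,y) = (y - a x - b)^2 - eps x, written out in coordinates *)
Definition gL (a b eps : R) (w : 'rV[R]_5) : R :=
  a ^+ 2 * w 0 0 - 2 * a * w 0 1 + w 0 2 + (2 * a * b - eps) * w 0 3
  - 2 * b * w 0 4 + b ^+ 2.

Definition aff_indep m (I : finType) (x : I -> 'rV[R]_m) : Prop :=
  forall l : I -> R, \sum_i l i = 0 -> \sum_i l i *: x i = 0 -> forall i, l i = 0.

Definition conv_mem m (I : finType) (x : I -> 'rV[R]_m) (p : 'rV[R]_m) : Prop :=
  exists l : I -> R, (forall i, 0 <= l i) /\ \sum_i l i = 1 /\ p = \sum_i l i *: x i.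

Definition dotv m (c p : 'rV[R]_m) : R := \sum_(i < m) c 0 i * p 0 i.

(* conv(F) is a facet of conv(S) (in R^m): it is the intersection of conv(S)
   with a supporting hyperplane {c.p = beta} (c <> 0), and it has affine
   dimension m-1 (it contains m affinely independent points). *)
Definition is_facet m (J I : finType) (F : J -> 'rV[R]_m) (S : I -> 'rV[R]_m) : Prop :=
  exists (c : 'rV[R]_m) (beta : R),
    [/\ c != 0,
        (forall i, dotv c (S i) <= beta),
        (forall p, (conv_mem S p /\ dotv c p = beta) <-> conv_mem F p) &
        exists y : 'I_m -> 'rV[R]_m, (forall j, conv_mem F (y j)) /\ aff_indep y].

(* p^z_sigma = (nu(p^eps_sigma), z_sigma) in R^(5 + (d-5)) = R^d (as d > 5) *)
Definition pz d n (vx vy : 'I_n -> R) (eps : R) (z : word d n -> 'rV[R]_(d - 5))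
  (sigma : word d n) : 'rV[R]_(5 + (d - 5)) :=
  row_mx (nu (phi eps (pt vx vy sigma))) (z sigma).

End Geom.

(* Main.v *)
Require Import Defs.
From HB Require Import structures.
From mathcomp Require Import all_boot all_order all_algebra.
From mathcomp Require Import reals.
From Stdlib Require Import Classical.
From mathcomp Require Import ring.
Import Order.TTheory GRing.Theory Num.Theory.
Local Open Scope ring_scope.

Section Aux.
Variable R : realType.

Lemma sigma_tau_inj d n (tau : pattern d n) : is_line tau -> injective (sigma_tau tau).
Proof.
case/existsP=> i /eqP Hi k k' E; have := congr1 (fun f : word d n => f i) E.
by rewrite /= !ffunE Hi.
Qed.

Lemma sum_line d n (V : zmodType) (tau : pattern d n) (F : word d n -> V) :
  is_line tau -> (forall s, ~ in_line tau s -> F s = 0) ->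
  \sum_s F s = \sum_k F (sigma_tau tau k).
Proof.
move=> Hl HF.
rewrite (bigID (fun s => s \in [set sigma_tau tau k | k : 'I_d])) /=.
rewrite [X in _ + X]big1 ?addr0.
  rewrite big_imset //=.
  by move=> x y _ _; apply: sigma_tau_inj.
move=> s Hs; apply: HF => -[k Hk]; move/negP: Hs; apply; apply/imsetP; exists k => //.
Qed.

Lemma conv_sub m (I J : finType) (h : J -> I) (x : I -> 'rV[R]_m) p :
  conv_mem (fun j => x (h j)) p -> conv_mem x p.
Proof.
case=> l [l0 [l1 ->]].
exists (fun i => \sum_j (i == h j)%:R * l j); split; [|split].
- by move=> i; apply: sumr_ge0 => j _; rewrite mulr_ge0 ?ler0n.
- rewrite exchange_big /= -[RHS]l1; apply: eq_bigr => j _.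
  rewrite (bigD1 (h j)) //= eqxx mul1r big1 ?addr0 // => i /negbTE ->; by rewrite mul0r.
- symmetry; under eq_bigr do rewrite scaler_suml.
  rewrite exchange_big /=; apply: eq_bigr => j _.
  rewrite (bigD1 (h j)) //= eqxx mul1r big1 ?addr0 // => i /negbTE ->; by rewrite mul0r scale0r.
Qed.

Lemma dotv_sum m (I : finType) (c : 'rV[R]_m) (l : I -> R) (x : I -> 'rV[R]_m) :
  dotv c (\sum_i l i *: x i) = \sum_i l i * dotv c (x i).
Proof.
rewrite /dotv; under eq_bigr do rewrite summxE mulr_sumr.
rewrite exchange_big /=; apply: eq_bigr => i _; rewrite mulr_sumr; apply: eq_bigr => j _.
by rewrite mxE mulrCA.
Qed.

Definition cL (a b eps : R) : 'rV[R]_5 :=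
  \row_(i < 5) nth 0 [:: - a ^+ 2; 2 * a; -1; - (2 * a * b - eps); 2 * b] i.

Lemma dot_pz k (c w : 'rV[R]_5) (zz : 'rV[R]_k) :
  dotv (row_mx c 0) (row_mx w zz) = dotv c w.
Proof.
rewrite /dotv big_split_ord /= [X in _ + X]big1 ?addr0.
  by apply: eq_bigr => i _; rewrite !row_mxEl.
by move=> j _; rewrite row_mxEr mxE mul0r.
Qed.

Lemma dot_gL a b eps w : dotv (cL a b eps) w = b ^+ 2 - gL a b eps w.
Proof.
rewrite /dotv /gL !big_ord_recl big_ord0 !mxE /=.
have -> : lift ord0 (lift ord0 (lift ord0 (lift ord0 ord0))) = 4 :> 'I_5 by apply/val_inj.
have -> : lift ord0 (lift ord0 (lift ord0 ord0)) = 3 :> 'I_5 by apply/val_inj.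
have -> : lift ord0 (lift ord0 ord0) = 2 :> 'I_5 by apply/val_inj.
have -> : lift ord0 ord0 = 1 :> 'I_5 by apply/val_inj.
have -> : ord0 = 0 :> 'I_5 by apply/val_inj.
ring.
Qed.

Lemma sum_narrow (V : zmodType) d (H : (5 <= d)%N) (G : 'I_d -> V) :
  (forall k : 'I_d, (5 <= k)%N -> G k = 0) ->
  \sum_k G k = \sum_(i < 5) G (widen_ord H i).
Proof.
move=> HG; rewrite (bigID (fun k : 'I_d => (k < 5)%N)) /= [X in _ + X]big1 ?addr0.
  by rewrite big_ord_narrow.
by move=> k; rewrite -leqNgt; apply: HG.
Qed.

Lemma aff_indep_bij m (I J : finType) (h : J -> I) (g : I -> J) (x : I -> 'rV[R]_m) :
  cancel h g -> cancel g h -> aff_indep x -> aff_indep (fun j => x (h j)).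
Proof.
move=> hg gh Hx l l1 l2 j.
suff: l (g (h j)) = 0 by rewrite hg.
apply: (Hx (fun i => l (g i))).
- rewrite (reindex h) /=; last by exists g => ? _.
  by rewrite -[RHS]l1; apply: eq_big => // i; rewrite hg.
- rewrite (reindex h) /=; last by exists g => ? _.
  by rewrite -[RHS]l2; apply: eq_big => // i; rewrite hg.
Qed.

End Aux.

Theorem lemma2p8 (R : realType) (d n : nat) (vx vy : 'I_n -> R)
    (a b : pattern d n -> R) (eps : R) :
  (5 < d)%N ->
  (forall i, 0 < vx i) ->
  injective (@pt R d n vx vy) ->
  (forall tau, is_line tau -> forall sigma,
      (pt vx vy sigma).2 = a tau * (pt vx vy sigma).1 + b tau <-> in_line tau sigma) ->
  0 < eps ->
  (forall tau, is_line tau -> forall sigma, in_line tau sigma ->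
      gL (a tau) (b tau) eps (nu (phi eps (pt vx vy sigma))) = 0) ->
  (forall tau, is_line tau -> forall sigma, ~ in_line tau sigma ->
      0 < gL (a tau) (b tau) eps (nu (phi eps (pt vx vy sigma)))) ->
  (forall tau, is_line tau -> forall f : 'I_5 -> 'I_d, injective f ->
      aff_indep (fun i => nu (phi eps (pt vx vy (sigma_tau tau (f i)))))) ->
  exists z : word d n -> 'rV[R]_(d - 5),
    (forall tau, is_line tau ->
       aff_indep (fun k : 'I_d => pz vx vy eps z (sigma_tau tau k))) /\
    (forall tau, is_line tau ->
       is_facet (fun k : 'I_d => pz vx vy eps z (sigma_tau tau k))
                (fun sigma : word d n => pz vx vy eps z sigma)).
Proof.
move=> d5 _ _ _ _ Hon Hoff Hind.
have d5' : (5 <= d)%N := ltnW d5.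
pose z := fun s : word d n =>
  (\row_(j < d - 5) \sum_(i < n) (((s i : nat) == (j + 5)%N)%:R : R)) : 'rV[R]_(d - 5).
have AI : forall tau, is_line tau ->
    aff_indep (fun k : 'I_d => pz vx vy eps z (sigma_tau tau k)).
  move=> tau Hl l Hs Hv.
  have Hz : forall j : 'I_(d-5), \sum_k l k * z (sigma_tau tau k) 0 j = 0.
    move=> j; have := congr1 (fun M : 'rV[R]_(5 + (d - 5)) => M 0 (rshift 5 j)) Hv.
    rewrite /= summxE [RHS]mxE => E; rewrite -[RHS]E; apply: eq_bigr => k _.
    by rewrite /pz [RHS]mxE row_mxEr.
  have Hbig : forall k : 'I_d, (5 <= k)%N -> l k = 0.
    move=> k k5.
    have jlt : (k - 5 < d - 5)%N by rewrite ltn_sub2r.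
    have := Hz (Ordinal jlt).
    have -> : \sum_k0 l k0 * z (sigma_tau tau k0) 0 (Ordinal jlt) =
        (\sum_i (((tau i == None) : nat)%:R : R)) * l k.
      under eq_bigr do rewrite mxE mulr_sumr.
      rewrite exchange_big mulr_suml /=; apply: eq_bigr => i _.
      case Ht: (tau i) => [c|] /=.
      - under eq_bigr do rewrite /sigma_tau ffunE Ht.
        by rewrite -mulr_suml Hs !mul0r.
      - under eq_bigr do rewrite /sigma_tau ffunE Ht.
        rewrite (bigD1 k) //= (subnK k5) eqxx mulr1 big1 ?addr0 ?mul1r // => k' Hk'.
        rewrite (_ : (_ == _) = false) ?mulr0 //.
        apply/negbTE; move: Hk'; apply: contra => /eqP H; apply/eqP/val_inj.
        exact: H.
    move/eqP; rewrite mulf_eq0 => /orP [|/eqP //].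
    case/existsP: Hl => i0 /eqP Hi0.
    by rewrite -natr_sum pnatr_eq0 (bigD1 i0) //= Hi0 eqxx.
  have Hnu : \sum_k l k *: nu (phi eps (pt vx vy (sigma_tau tau k))) = 0.
    apply/matrixP => i j.
    have := congr1 (fun M : 'rV[R]_(5 + (d - 5)) => M i (lshift _ j)) Hv.
    rewrite /= summxE [RHS]mxE => E; rewrite [RHS]mxE -[RHS]E summxE.
    by apply: eq_bigr => k _; rewrite /pz [LHS]mxE [RHS]mxE row_mxEl.
  have winj : injective (widen_ord d5').
    by move=> x y /(congr1 val) /= /val_inj.
  have Hsmall := Hind tau Hl (widen_ord d5') winj (fun i => l (widen_ord d5' i)).
  move=> k; case: (ltnP k 5) => hk; last exact: Hbig.
  have -> : k = widen_ord d5' (Ordinal hk) by apply/val_inj.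
  apply: Hsmall.
  - by rewrite -(@sum_narrow _ d d5' l Hbig).
  - rewrite -(@sum_narrow _ d d5' (fun k => l k *: nu (phi eps (pt vx vy (sigma_tau tau k))))) //.
    by move=> k' /Hbig ->; rewrite scale0r.
exists z; split => //.
move=> tau Hl.
pose g := fun s : word d n => gL (a tau) (b tau) eps (nu (phi eps (pt vx vy s))).
have g0 : forall s, 0 <= g s.
  move=> s; case: (classic (in_line tau s)) => H.
    by rewrite /g Hon.
  exact/ltW/Hoff.
have Hdot : forall s, dotv (row_mx (@cL R (a tau) (b tau) eps) 0) (pz vx vy eps z s)
    = b tau ^+ 2 - g s.
  by move=> s; rewrite /pz dot_pz dot_gL.
exists (row_mx (@cL R (a tau) (b tau) eps) 0), (b tau ^+ 2); split.
- apply/eqP => H.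
  have := congr1 (fun M : 'rV[R]_(5 + (d - 5)) => M 0 (lshift _ (2 : 'I_5))) H.
  rewrite /= row_mxEl !mxE /= => /eqP; by rewrite oppr_eq0 oner_eq0.
- by move=> s; rewrite Hdot gerBl.
- move=> p; split.
  + case=> -[l [l0 [l1 ->]]]; rewrite dotv_sum => Hd.
    have Hg : \sum_s l s * g s = 0.
      move: Hd; under eq_bigr do rewrite Hdot mulrBr.
      rewrite sumrB -mulr_suml l1 mul1r => /eqP.
      by rewrite subr_eq addrC -subr_eq subrr eq_sym => /eqP.
    have Hz : forall s, ~ in_line tau s -> l s = 0.
      have Hnn : forall s, true -> 0 <= l s * g s by move=> i _; rewrite mulr_ge0.
      move=> s Hs; have := psumr_eq0P Hnn Hg (i:=s) isT.
      by move=> /eqP; rewrite mulf_eq0 (gt_eqF (Hoff _ Hl _ Hs)) orbF => /eqP.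
    exists (fun k => l (sigma_tau tau k)); split; [|split].
    * by move=> k.
    * by rewrite -(sum_line _ _ _ _ _ Hl Hz).
    * rewrite (sum_line _ _ _ _ _ Hl) //.
      by move=> s /Hz ->; rewrite scale0r.
  + move=> Hc; split; first exact: conv_sub Hc.
    case: Hc => l [l0 [l1 ->]]; rewrite dotv_sum.
    under eq_bigr => k _ do rewrite Hdot /g (Hon tau Hl _ (ex_intro _ k erefl)) subr0.
    by rewrite -mulr_suml l1 mul1r.
- have E : (5 + (d - 5))%N = d by rewrite subnKC.
  exists (fun j => pz vx vy eps z (sigma_tau tau (cast_ord E j))); split.
  + move=> j; exists (fun k => ((k == cast_ord E j) : nat)%:R); split; [|split].
    * by move=> k; rewrite ler0n.
    * rewrite (bigD1 (cast_ord E j)) //= eqxx big1 ?addr0 // => k /negbTE -> //.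
    * rewrite (bigD1 (cast_ord E j)) //= eqxx scale1r big1 ?addr0 // => k /negbTE ->.
      by rewrite scale0r.
  + exact: (@aff_indep_bij R _ _ _ (cast_ord E) (cast_ord (esym E))
      (fun k : 'I_d => pz vx vy eps z (sigma_tau tau k)) (cast_ordK E) (cast_ordKV E) (AI tau Hl)).
Qed.
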